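(* Let $A\subseteq\mathbb{R}$ be open, $x\in A$, and $f:A\to\mathbb{R}$ locally Lipschitz. The following are equivalent: (1) $f$ is differentiable at $x$; (2) there exists a unique $m\in\mathbb{R}$ such that ${}^\bullet f(x+h)=f(x)+h\cdot m$ in ${}^\bullet\mathbb{R}$ for all $h\in D$. In this case $m=f'(x)$.
   Context: A function $x:\mathbb{R}\to\mathbb{R}$ is nilpotent if $|x(t)-x(0)|^k=o(t)$ as $t\to0$ for some $k\in\mathbb{N}$; for $A\subseteq\mathbb{R}$, $\mathrm{Nil}(A)$ is the set of nilpotent functions with values in $A$. For such $x,y$, $x\sim y$ iff $x(t)=y(t)+o(t)$ as $t\to0$. ${}^\bullet A:=\mathrm{Nil}(A)/\sim$, identified with a subset of ${}^\bullet\mathbb{R}:=\mathrm{Nil}(\mathbb{R})/\sim$ (a commutative ring under pointwise operations, reals identified with constant functions). For locally Lipschitz $f:A\to\mathbb{R}$, ${}^\bullet f([y]):=[f\circ y]$ on ${}^\bullet A$. $D:=\{h\in{}^\bullet\mathbb{R}:\limsup_{t\to0}|h(t)/t|<+\infty\}$. For $h\in D$ and $x\in A$ open, $x+h\in{}^\bullet A$, so ${}^\bullet f(x+h)$ is defined. *)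

(* Defs.v *)
From Stdlib Require Import Reals.
From Coquelicot Require Import Coquelicot.
Open Scope R_scope.

Definition little_o_t (g : R -> R) : Prop :=
  forall eps, 0 < eps -> exists delta, 0 < delta /\
    forall t, 0 < Rabs t < delta -> Rabs (g t) <= eps * Rabs t.

Definition nilpotent (x : R -> R) : Prop :=
  exists k : nat, little_o_t (fun t => (Rabs (x t - x 0)) ^ k).

Definition nil_equiv (x y : R -> R) : Prop :=
  little_o_t (fun t => x t - y t).

(* h (a representative of an element of *R) lies in D:
   h nilpotent and limsup_{t->0} |h(t)/t| < +oo. *)
Definition in_D (h : R -> R) : Prop :=
  nilpotent h /\
  exists C delta, 0 < delta /\
    forall t, 0 < Rabs t < delta -> Rabs (h t / t) <= C.

(* f : A -> R locally Lipschitz (f given on all of R, only its values on A matter). *)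
Definition loc_lipschitz_on (A : R -> Prop) (f : R -> R) : Prop :=
  forall a, A a -> exists eps L, 0 < eps /\
    forall y z, A y -> A z -> Rabs (y - a) < eps -> Rabs (z - a) < eps ->
      Rabs (f y - f z) <= L * Rabs (y - z).

(* Statement (2) for a given m:  *f(x+h) = f(x) + h*m in *R for all h in D. *)
Definition dot_linear (f : R -> R) (x m : R) : Prop :=
  forall h, in_D h -> nil_equiv (fun t => f (x + h t)) (fun t => f x + h t * m).

(* Main.v *)
Require Import Defs.
From Stdlib Require Import Reals.
From Coquelicot Require Import Coquelicot.
From Stdlib Require Import Lra.
Open Scope R_scope.

Lemma deriv_to_o (f : R -> R) (x l : R) : derivable_pt_lim f x l ->
  forall eps, 0 < eps -> exists d, 0 < d /\ forall u, Rabs u < d ->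
    Rabs (f (x + u) - (f x + u * l)) <= eps * Rabs u.
Proof.
  intros H eps He. destruct (H eps He) as [[d Hd] Hd']. exists d; split; auto.
  intros u Hu. destruct (Req_dec u 0) as [->|Hu0].
  - rewrite Rplus_0_r, Rmult_0_l, Rplus_0_r, Rminus_diag, !Rabs_R0. lra.
  - specialize (Hd' u Hu0 Hu).
    replace (f (x + u) - (f x + u * l)) with (((f (x + u) - f x) / u - l) * u)
      by (field; auto).
    rewrite Rabs_mult. apply Rmult_le_compat_r; [apply Rabs_pos|lra].
Qed.

Lemma o_to_deriv (f : R -> R) (x m : R) :
  little_o_t (fun t => f (x + t) - (f x + t * m)) -> derivable_pt_lim f x m.
Proof.
  intros H eps He. destruct (H (eps/2) ltac:(lra)) as [d [Hd Hd']].
  exists (mkposreal d Hd). intros h Hh0 Hh. simpl in Hh.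
  assert (Ha : 0 < Rabs h) by (apply Rabs_pos_lt; auto).
  specialize (Hd' h (conj Ha Hh)).
  replace ((f (x + h) - f x) / h - m) with ((f (x + h) - (f x + h * m)) / h)
    by (field; auto).
  unfold Rdiv. rewrite Rabs_mult, Rabs_inv.
  apply Rle_lt_trans with (eps / 2 * Rabs h * / Rabs h).
  - apply Rmult_le_compat_r; auto. left; apply Rinv_0_lt_compat; auto.
  - field_simplify; lra.
Qed.

Lemma id_in_D : in_D (fun t => t).
Proof.
  split.
  - exists 2%nat. intros eps He. exists eps. split; auto.
    intros t [Ht1 Ht2]. rewrite Rminus_0_r. simpl. rewrite Rmult_1_r.
    rewrite Rabs_mult, Rabs_Rabsolu. apply Rmult_le_compat_r; lra.
  - exists 1, 1. split; [lra|]. intros t [Ht _].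
    assert (t <> 0) by (intro; subst; rewrite Rabs_R0 in Ht; lra).
    unfold Rdiv; rewrite Rinv_r; auto. rewrite Rabs_R1; lra.
Qed.

Lemma dl_uniq (f : R -> R) (x m m' : R) :
  dot_linear f x m -> dot_linear f x m' -> m = m'.
Proof.
  intros H1 H2. specialize (H1 _ id_in_D). specialize (H2 _ id_in_D).
  destruct (Req_dec m m') as [|Hne]; auto. exfalso.
  assert (Hne' : 0 < Rabs (m - m')) by (apply Rabs_pos_lt; lra).
  set (e := Rabs (m - m') / 4).
  assert (He : 0 < e) by (unfold e; lra).
  destruct (H1 e He) as [d1 [Hd1 H1']]. destruct (H2 e He) as [d2 [Hd2 H2']].
  set (t := Rmin d1 d2 / 2).
  assert (Ht : 0 < t) by (unfold t; pose proof (Rmin_glb_lt d1 d2 0 Hd1 Hd2); lra).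
  assert (Htd1 : t < d1) by (unfold t; pose proof (Rmin_l d1 d2); lra).
  assert (Htd2 : t < d2) by (unfold t; pose proof (Rmin_r d1 d2); lra).
  assert (A1 : 0 < Rabs t < d1) by (rewrite Rabs_pos_eq; lra).
  assert (A2 : 0 < Rabs t < d2) by (rewrite Rabs_pos_eq; lra).
  specialize (H1' t A1). specialize (H2' t A2). simpl in H1', H2'.
  rewrite (Rabs_pos_eq t) in H1', H2' by lra.
  assert (Rabs (t * (m' - m)) <= 2 * e * t).
  { replace (t * (m' - m)) with
      ((f (x + t) - (f x + t * m)) - (f (x + t) - (f x + t * m'))) by ring.
    eapply Rle_trans; [apply Rabs_triang|]. rewrite Rabs_Ropp. lra. }
  rewrite Rabs_mult, Rabs_pos_eq in H by lra.
  rewrite Rabs_minus_sym in H. unfold e in H.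
  assert (t * Rabs (m - m') <= t * (Rabs (m - m') / 2)) by lra.
  apply Rmult_le_reg_l in H0; lra.
Qed.

Lemma deriv_dl (f : R -> R) (x l : R) : derivable_pt_lim f x l -> dot_linear f x l.
Proof.
  intros Hd h [_ [C [d1 [Hd1 HC]]]] eps He.
  set (C' := Rabs C + 1).
  assert (HC' : 0 < C') by (unfold C'; pose proof (Rabs_pos C); lra).
  destruct (deriv_to_o f x l Hd (eps / C') ltac:(apply Rdiv_lt_0_compat; lra))
    as [eta [Heta Heta']].
  exists (Rmin d1 (eta / C')). split.
  { apply Rmin_glb_lt; auto. apply Rdiv_lt_0_compat; lra. }
  intros t [Ht1 Ht2].
  assert (t <> 0) by (intro; subst; rewrite Rabs_R0 in Ht1; lra).
  assert (Hht : Rabs (h t) <= C' * Rabs t).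
  { specialize (HC t (conj Ht1 (Rlt_le_trans _ _ _ Ht2 (Rmin_l _ _)))).
    replace (h t) with (h t / t * t) by (field; auto).
    rewrite Rabs_mult. apply Rmult_le_compat_r; [apply Rabs_pos|].
    unfold C'. pose proof (Rle_abs C). lra. }
  assert (Hlt : Rabs (h t) < eta).
  { pose proof (Rmin_r d1 (eta / C')).
    assert (HH : C' * Rabs t < C' * (eta / C')) by (apply Rmult_lt_compat_l; lra).
    replace (C' * (eta / C')) with eta in HH by (field; lra). lra. }
  specialize (Heta' _ Hlt).
  eapply Rle_trans; [apply Heta'|].
  apply Rle_trans with (eps / C' * (C' * Rabs t)).
  - apply Rmult_le_compat_l; auto. left; apply Rdiv_lt_0_compat; lra.
  - right; field; lra.
Qed.

Theorem mainTheorem11 (A : R -> Prop) (f : R -> R) (x : R) :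
  open_set A -> A x -> loc_lipschitz_on A f ->
  (ex_derive f x <-> exists! m : R, dot_linear f x m) /\
  (ex_derive f x -> dot_linear f x (Derive f x)).
Proof.
  intros _ _ _.
  assert (K : ex_derive f x -> dot_linear f x (Derive f x)).
  { intros [l Hl]. rewrite (is_derive_unique f x l Hl).
    apply deriv_dl. apply is_derive_Reals; auto. }
  split; auto. split.
  - intros Hd. exists (Derive f x). split; auto.
    intros m' Hm'. eapply dl_uniq; eauto.
  - intros [m [Hm _]]. exists m. apply is_derive_Reals. apply o_to_deriv.
    specialize (Hm _ id_in_D). exact Hm.
Qed.
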